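(* The class of $(\circ,\wedge,\mathsf{A})$-algebras that are completely representable by partial functions is not closed under subalgebras, not closed under directed unions, and not closed under homomorphic images. Consequently it is not axiomatisable by any universal first-order theory, nor by any universal-existential first-order theory, nor by any positive first-order theory.
   Context: A $(\circ,\wedge,\mathsf{A})$-algebra is a set with two binary operations $\circ,\wedge$ and one unary operation $\mathsf{A}$. An algebra of partial functions of this signature is a set of partial functions, with base $X$ the union of all their domains and ranges, closed under: composition $f\circ g=\{(x,z)\mid \exists y\,(x,y)\in f,(y,z)\in g\}$; intersection; antidomain $\mathsf{A}(f)=\{(x,x)\mid x\in X, x\notin\mathrm{dom}(f)\}$. A representation by partial functions is an isomorphism onto such an algebra. The order is $a\le b\iff a\wedge b=a$. A representation $\theta$ is complete if for every nonempty $S$ with $\bigwedge S$ existing, $\theta(\bigwedge S)=\bigcap\theta[S]$ (equivalently, for every $S$ with $\bigvee S$ existing, $\theta(\bigvee S)=\bigcup\theta[S]$). An algebra is completely representable if it has a complete representation. *)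

(* Defs.v *)
From Stdlib Require Import Arith.

Set Implicit Arguments.

Record algebra := Algebra {
  carrier :> Type;
  acomp : carrier -> carrier -> carrier;
  ameet : carrier -> carrier -> carrier;
  aant  : carrier -> carrier
}.

Definition ale (A : algebra) (a b : A) : Prop := ameet A a b = a.

Definition is_meet (A : algebra) (S : A -> Prop) (m : A) : Prop :=
  (forall s, S s -> ale A m s) /\
  (forall l, (forall s, S s -> ale A l s) -> ale A l m).

(* A representation over base X: an isomorphism theta onto an algebra of
   partial functions on X (relations X -> X -> Prop), where composition is
   f o g = {(x,z) | exists y, (x,y) in f, (y,z) in g}, meet is intersection,
   antidomain is A(f) = {(x,x) | x in X, x notin dom f}, and X is the union
   of all domains and ranges. *)
Record representation (A : algebra) (X : Type) := Representation {
  theta : A -> X -> X -> Prop;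
  theta_functional : forall a x y z, theta a x y -> theta a x z -> y = z;
  theta_injective : forall a b,
      (forall x y, theta a x y <-> theta b x y) -> a = b;
  theta_comp : forall a b x z,
      theta (acomp A a b) x z <-> exists y, theta a x y /\ theta b y z;
  theta_meet : forall a b x y,
      theta (ameet A a b) x y <-> theta a x y /\ theta b x y;
  theta_ant : forall a x y,
      theta (aant A a) x y <-> x = y /\ ~ (exists z, theta a x z);
  theta_base : forall x, exists a,
      (exists y, theta a x y) \/ (exists y, theta a y x)
}.

Definition complete_rep (A : algebra) (X : Type) (r : representation A X) : Prop :=
  forall (S : A -> Prop), (exists s, S s) ->
  forall m, is_meet A S m ->
  forall x y, theta r m x y <-> (forall s, S s -> theta r s x y).

Definition completely_representable (A : algebra) : Prop :=
  exists (X : Type) (r : representation A X), complete_rep r.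

Record subalg (B : algebra) := Subalg {
  sub_pred : B -> Prop;
  sub_comp : forall a b, sub_pred a -> sub_pred b -> sub_pred (acomp B a b);
  sub_meet : forall a b, sub_pred a -> sub_pred b -> sub_pred (ameet B a b);
  sub_ant  : forall a, sub_pred a -> sub_pred (aant B a)
}.

Definition sub_algebra (B : algebra) (S : subalg B) : algebra :=
  {| carrier := { x : B | sub_pred S x };
     acomp := fun a b => exist _ (acomp B (proj1_sig a) (proj1_sig b))
                          (sub_comp S _ _ (proj2_sig a) (proj2_sig b));
     ameet := fun a b => exist _ (ameet B (proj1_sig a) (proj1_sig b))
                          (sub_meet S _ _ (proj2_sig a) (proj2_sig b));
     aant := fun a => exist _ (aant B (proj1_sig a)) (sub_ant S _ (proj2_sig a)) |}.

Definition directed_union_of (B : algebra) (I : Type) (F : I -> subalg B) : Prop :=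
  (exists i : I, True) /\
  (forall i j, exists k, (forall x, sub_pred (F i) x -> sub_pred (F k) x) /\
                         (forall x, sub_pred (F j) x -> sub_pred (F k) x)) /\
  (forall x : B, exists i, sub_pred (F i) x).

Definition is_hom (A B : algebra) (h : A -> B) : Prop :=
  (forall a b, h (acomp A a b) = acomp B (h a) (h b)) /\
  (forall a b, h (ameet A a b) = ameet B (h a) (h b)) /\
  (forall a, h (aant A a) = aant B (h a)).

Definition surjective (A B : Type) (h : A -> B) : Prop :=
  forall b, exists a, h a = b.

Inductive term : Type :=
| tvar  : nat -> term
| tcomp : term -> term -> term
| tmeet : term -> term -> term
| tant  : term -> term.

Fixpoint teval (A : algebra) (v : nat -> A) (t : term) : A :=
  match t with
  | tvar n => v n
  | tcomp t1 t2 => acomp A (teval A v t1) (teval A v t2)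
  | tmeet t1 t2 => ameet A (teval A v t1) (teval A v t2)
  | tant t1 => aant A (teval A v t1)
  end.

Inductive formula : Type :=
| FTrue  : formula
| FFalse : formula
| FEq    : term -> term -> formula
| FNot   : formula -> formula
| FAnd   : formula -> formula -> formula
| FOr    : formula -> formula -> formula
| FImp   : formula -> formula -> formula
| FAll   : nat -> formula -> formula
| FEx    : nat -> formula -> formula.

Definition upd (A : Type) (v : nat -> A) (n : nat) (a : A) : nat -> A :=
  fun m => if Nat.eqb m n then a else v m.

Fixpoint sat (A : algebra) (v : nat -> A) (f : formula) : Prop :=
  match f with
  | FTrue => True
  | FFalse => False
  | FEq t1 t2 => teval A v t1 = teval A v t2
  | FNot g => ~ sat A v g
  | FAnd g h => sat A v g /\ sat A v h
  | FOr g h => sat A v g \/ sat A v h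
  | FImp g h => sat A v g -> sat A v h
  | FAll n g => forall a : A, sat A (upd v n a) g
  | FEx n g => exists a : A, sat A (upd v n a) g
  end.

Fixpoint qfree (f : formula) : Prop :=
  match f with
  | FTrue | FFalse | FEq _ _ => True
  | FNot g => qfree g
  | FAnd g h | FOr g h | FImp g h => qfree g /\ qfree h
  | FAll _ _ | FEx _ _ => False
  end.

Inductive universal : formula -> Prop :=
| univ_qf : forall f, qfree f -> universal f
| univ_all : forall n f, universal f -> universal (FAll n f).

Inductive existential : formula -> Prop :=
| ex_qf : forall f, qfree f -> existential f
| ex_ex : forall n f, existential f -> existential (FEx n f).

Inductive univ_exist : formula -> Prop :=
| ae_ex : forall f, existential f -> univ_exist f
| ae_all : forall n f, univ_exist f -> univ_exist (FAll n f).

Inductive positive : formula -> Prop :=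
| pos_true : positive FTrue
| pos_false : positive FFalse
| pos_eq : forall t1 t2, positive (FEq t1 t2)
| pos_and : forall f g, positive f -> positive g -> positive (FAnd f g)
| pos_or : forall f g, positive f -> positive g -> positive (FOr f g)
| pos_all : forall n f, positive f -> positive (FAll n f)
| pos_ex : forall n f, positive f -> positive (FEx n f).

(* A is a model of theory T (free variables read universally, i.e. each
   formula is taken as its universal closure) *)
Definition models (A : algebra) (T : formula -> Prop) : Prop :=
  forall f, T f -> forall v : nat -> A, sat A v f.

Definition axiomatises (T : formula -> Prop) (K : algebra -> Prop) : Prop :=
  forall A : algebra, K A <-> models A T.

(* Main.v *)
Require Import Defs.
From Stdlib Require Import Arith List Lia Classical FunctionalExtensionality PropExtensionality ProofIrrelevance ClassicalEpsilon.
Import ListNotations.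

Lemma set_ext (Y : Type) (a b : Y -> Prop) : (forall u, a u <-> b u) -> a = b.
Proof. intro H. apply functional_extensionality; intro u. apply propositional_extensionality. apply H. Qed.

Lemma sig_ext (T : Type) (P : T -> Prop) (a b : {x | P x}) : proj1_sig a = proj1_sig b -> a = b.
Proof. destruct a as [a pa], b as [b pb]; simpl; intros ->. f_equal. apply proof_irrelevance. Qed.

Definition powB (Y : Type) : algebra :=
  {| carrier := Y -> Prop;
     acomp := fun a b u => a u /\ b u;
     ameet := fun a b u => a u /\ b u;
     aant := fun a u => ~ a u |}.

Definition setrep (A : algebra) (Y : Type) (ts : A -> Y -> Prop) : Prop :=
  (forall a b u, ts (acomp A a b) u <-> ts a u /\ ts b u) /\
  (forall a b u, ts (ameet A a b) u <-> ts a u /\ ts b u) /\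
  (forall a u, ts (aant A a) u <-> ~ ts a u) /\
  (forall a b, (forall u, ts a u <-> ts b u) -> a = b).

Lemma setrep_pow (Y : Type) : setrep (powB Y) Y (fun (a : powB Y) (u : Y) => a u).
Proof.
  split; [|split; [|split]]; simpl; try tauto.
  intros a b H. apply set_ext. exact H.
Qed.

Lemma setrep_sub (B : algebra) (Y : Type) (ts : B -> Y -> Prop) (S : subalg B) :
  setrep B Y ts -> setrep (sub_algebra S) Y (fun (x : sub_algebra S) u => ts (proj1_sig x) u).
Proof.
  intros [Hc [Hm [Ha Hi]]]. split; [|split; [|split]]; simpl.
  - intros a b u. apply Hc.
  - intros a b u. apply Hm.
  - intros a u. apply Ha.
  - intros a b H. apply sig_ext. apply Hi. exact H.
Qed.

Lemma setrep_rep_exists (A : algebra) (Y : Type) (ts : A -> Y -> Prop) (a0 : A) :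
  setrep A Y ts ->
  { r : representation A Y | forall a u v, theta r a u v <-> u = v /\ ts a u }.
Proof.
  intro H.
  unshelve refine (exist _ (@Representation A Y (fun a u v => u = v /\ ts a u) _ _ _ _ _ _) _); cbv beta.
  - intros a x y z [-> _] [-> _]; reflexivity.
  - destruct H as [Hc [Hm [Ha Hi]]]. intros a b Hab; apply Hi; intro u; specialize (Hab u u); tauto.
  - destruct H as [Hc [Hm [Ha Hi]]]. intros a b x z; rewrite Hc; split.
    + intros [-> [Ha' Hb']]; exists z; tauto.
    + intros [y [[-> ?] [-> ?]]]; tauto.
  - destruct H as [Hc [Hm [Ha Hi]]]. intros; rewrite Hm; tauto.
  - destruct H as [Hc [Hm [Ha Hi]]]. intros a x y; rewrite Ha; split.
    + intros [-> Hn]; split; [reflexivity| intros [z [-> Hz]]; tauto].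
    + intros [-> Hn]; split; [reflexivity| intro Hz; apply Hn; exists y; tauto].
  - destruct H as [Hc [Hm [Ha Hi]]]. intros x; exists (aant A (ameet A a0 (aant A a0))); left; exists x; split; [reflexivity|]; rewrite Ha, Hm, Ha; tauto.
  - intros; simpl; tauto.
Defined.

Lemma setrep_cr (A : algebra) (Y : Type) (ts : A -> Y -> Prop) (a0 : A) :
  setrep A Y ts ->
  (forall x : Y, exists e, ts e x /\ forall s, ts s x -> forall u, ts e u -> ts s u) ->
  completely_representable A.
Proof.
  intros H Hat.
  destruct (@setrep_rep_exists A Y ts a0 H) as [r Hr].
  exists Y, r. intros S [s0 Hs0] m [Hlb Hgl] x y.
  destruct H as [Hc [Hm [Ha Hi]]].
  rewrite Hr. split.
  - intros [-> Hmx] s Hs. rewrite Hr. split; [reflexivity|].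
    specialize (Hlb s Hs). unfold ale in Hlb. rewrite <- Hlb in Hmx. rewrite Hm in Hmx. tauto.
  - intros Hall. destruct (proj1 (Hr _ _ _) (Hall s0 Hs0)) as [<- _].
    split; [reflexivity|].
    destruct (Hat x) as [e [Hex He]].
    assert (Hl : ale A (aant A (ameet A (aant A e) (aant A m))) m).
    { apply Hgl. intros s Hs. unfold ale. apply Hi. intro u. rewrite Hm.
      rewrite !Ha, Hm, !Ha.
      assert (Hsx : ts s x) by (apply (proj1 (Hr _ _ _) (Hall s Hs))).
      split; [tauto|]. intro Hnn. split; [exact Hnn|]. apply NNPP; intro Hns. apply Hnn. split.
      + intro Heu; apply Hns; exact (He s Hsx u Heu).
      + intro Hmu. apply Hns. specialize (Hlb s Hs); unfold ale in Hlb; rewrite <- Hlb in Hmu; rewrite Hm in Hmu; tauto. }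
    unfold ale in Hl.
    assert (Hlx: ts (aant A (ameet A (aant A e) (aant A m))) x) by (rewrite Ha, Hm, !Ha; tauto).
    rewrite <- Hl in Hlx. rewrite Hm in Hlx. tauto.
Qed.

Lemma setrep_ncr (A : algebra) (Y : Type) (ts : A -> Y -> Prop) (a0 : A) (y0 : Y) :
  setrep A Y ts ->
  (forall l u, ts l u -> exists l' p q, ts l p /\ ts l' p /\ ts l q /\ ~ ts l' q) ->
  ~ completely_representable A.
Proof.
  intros [Hc [Hm [Ha Hi]]] Hal [X [r Hr]].
  assert (Hpid : forall a u v, theta r a u v -> u = v).
  { intros a u v H. assert (E : a = aant A (aant A a)).
    { apply Hi. intro w. rewrite !Ha. split; [tauto| apply NNPP]. }
    rewrite E in H. apply (theta_ant r) in H. tauto. }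
  assert (Hx : inhabited X).
  { apply NNPP. intro Hn. assert (E : a0 = aant A a0).
    { apply (theta_injective r). intros x y. exfalso. apply Hn. exact (inhabits x). }
    assert (T := Ha a0 y0). rewrite <- E in T. tauto. }
  destruct Hx as [x].
  assert (Hz : forall w, ~ theta r (ameet A a0 (aant A a0)) x w).
  { intros w Hw. apply (theta_meet r) in Hw. destruct Hw as [H1 H2]. apply (theta_ant r) in H2. destruct H2 as [_ H2]. apply H2. exists w; exact H1. }
  assert (Htz : forall u, ~ ts (ameet A a0 (aant A a0)) u). { intros u. rewrite Hm, Ha. tauto. }
  assert (Hmeet : is_meet A (fun s => theta r s x x) (ameet A a0 (aant A a0))).
  { split.
    - intros s _. unfold ale. apply Hi. intro u. rewrite Hm. specialize (Htz u). tauto.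
    - intros l Hl. unfold ale. apply Hi. intro u. rewrite Hm. split; [tauto|]. intro Hlu. exfalso.
      destruct (Hal l u Hlu) as [l' [p [q [Hlp [Hl'p [Hlq Hl'q]]]]]].
      destruct (classic (theta r l' x x)) as [Hin|Hout].
      + specialize (Hl l' Hin). unfold ale in Hl. rewrite <- Hl in Hlq. rewrite Hm in Hlq. tauto.
      + assert (Hin : theta r (aant A l') x x).
        { apply (theta_ant r). split; [reflexivity|]. intros [w Hw].
          assert (x = w) by exact (Hpid _ _ _ Hw). subst w. tauto. }
        specialize (Hl _ Hin). unfold ale in Hl. rewrite <- Hl in Hlp. rewrite Hm, Ha in Hlp. tauto. }
  assert (Hne : exists s, theta r s x x).
  { exists (aant A (ameet A a0 (aant A a0))). apply (theta_ant r). split; [reflexivity|].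
    intros [w Hw]. exact (Hz w Hw). }
  specialize (Hr _ Hne _ Hmeet x x). apply (Hz x). apply Hr. intros s Hs; exact Hs.
Qed.

Fixpoint tvars (t : term) : list nat :=
  match t with
  | tvar n => [n]
  | tcomp a b => tvars a ++ tvars b
  | tmeet a b => tvars a ++ tvars b
  | tant a => tvars a
  end.

Fixpoint fvars (f : formula) : list nat :=
  match f with
  | FTrue | FFalse => []
  | FEq t1 t2 => tvars t1 ++ tvars t2
  | FNot g => fvars g
  | FAnd g h | FOr g h | FImp g h => fvars g ++ fvars h
  | FAll n g | FEx n g => n :: fvars g
  end.

Lemma teval_agree (A : algebra) (v w : nat -> A) (t : term) :
  (forall k, In k (tvars t) -> v k = w k) -> teval A v t = teval A w t.
Proof.
  induction t; simpl; intro H.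
  - apply H; left; reflexivity.
  - rewrite IHt1, IHt2; auto; intros k Hk; apply H; apply in_or_app; auto.
  - rewrite IHt1, IHt2; auto; intros k Hk; apply H; apply in_or_app; auto.
  - rewrite IHt; auto.
Qed.

Lemma upd_agree (A : Type) (v w : nat -> A) n a (l : list nat) :
  (forall k, In k (n :: l) -> v k = w k) -> forall k, In k l -> upd v n a k = upd w n a k.
Proof.
  intros H k Hk. unfold upd. destruct (Nat.eqb k n); auto. apply H. right; auto.
Qed.

Lemma sat_agree (A : algebra) (f : formula) : forall v w : nat -> A,
  (forall k, In k (fvars f) -> v k = w k) -> (sat A v f <-> sat A w f).
Proof.
  induction f; simpl; intros v w H.
  - tauto.
  - tauto.
  - rewrite (teval_agree _ v w t), (teval_agree _ v w t0); [tauto| |];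
      intros k Hk; apply H; apply in_or_app; auto.
  - rewrite (IHf v w H); tauto.
  - rewrite (IHf1 v w), (IHf2 v w); [tauto| |]; intros k Hk; apply H; apply in_or_app; auto.
  - rewrite (IHf1 v w), (IHf2 v w); [tauto| |]; intros k Hk; apply H; apply in_or_app; auto.
  - rewrite (IHf1 v w), (IHf2 v w); [tauto| |]; intros k Hk; apply H; apply in_or_app; auto.
  - split; intros Ha a; [rewrite <- (IHf (upd v n a) (upd w n a))|rewrite (IHf (upd v n a) (upd w n a))];
      auto; apply upd_agree; auto.
  - split; intros [a Ha]; exists a; [rewrite <- (IHf (upd v n a) (upd w n a))|rewrite (IHf (upd v n a) (upd w n a))];
      auto; apply upd_agree; auto.
Qed.

Lemma teval_sub (B : algebra) (S : subalg B) (v : nat -> sub_algebra S) (w : nat -> B) t :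
  (forall k, w k = proj1_sig (v k)) -> proj1_sig (teval (sub_algebra S) v t) = teval B w t.
Proof.
  intro H; induction t; simpl.
  - rewrite H; reflexivity.
  - rewrite IHt1, IHt2; reflexivity.
  - rewrite IHt1, IHt2; reflexivity.
  - rewrite IHt; reflexivity.
Qed.

Lemma upd_sub (B : algebra) (S : subalg B) (v : nat -> sub_algebra S) (w : nat -> B) n a :
  (forall k, w k = proj1_sig (v k)) -> forall k, upd w n (proj1_sig a) k = proj1_sig (upd v n a k).
Proof. intros H k; unfold upd; destruct (Nat.eqb k n); auto. Qed.

Lemma qf_sub (B : algebra) (S : subalg B) f : qfree f ->
  forall (v : nat -> sub_algebra S) (w : nat -> B),
  (forall k, w k = proj1_sig (v k)) -> (sat (sub_algebra S) v f <-> sat B w f).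
Proof.
  induction f; simpl; intros Hq v w H; try tauto.
  - rewrite <- (teval_sub _ S v w t H), <- (teval_sub _ S v w t0 H). split.
    + intros ->; reflexivity.
    + apply sig_ext.
  - rewrite (IHf Hq v w H); tauto.
  - rewrite (IHf1 (proj1 Hq) v w H), (IHf2 (proj2 Hq) v w H); tauto.
  - rewrite (IHf1 (proj1 Hq) v w H), (IHf2 (proj2 Hq) v w H); tauto.
  - rewrite (IHf1 (proj1 Hq) v w H), (IHf2 (proj2 Hq) v w H); tauto.
Qed.

Lemma univ_down (B : algebra) (S : subalg B) f : universal f ->
  forall (v : nat -> sub_algebra S) (w : nat -> B),
  (forall k, w k = proj1_sig (v k)) -> sat B w f -> sat (sub_algebra S) v f.
Proof.
  induction 1 as [f Hq|n f Hu IH]; intros v w H Hs.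
  - apply (qf_sub _ S _ Hq v w H); exact Hs.
  - simpl in *. intro a. apply (IH _ (upd w n (proj1_sig a))).
    + apply upd_sub; auto.
    + apply Hs.
Qed.

Lemma ex_up (B : algebra) (S : subalg B) f : existential f ->
  forall (v : nat -> sub_algebra S) (w : nat -> B),
  (forall k, w k = proj1_sig (v k)) -> sat (sub_algebra S) v f -> sat B w f.
Proof.
  induction 1 as [f Hq|n f Hu IH]; intros v w H Hs.
  - apply (qf_sub _ S _ Hq v w H); exact Hs.
  - simpl in *. destruct Hs as [a Ha]. exists (proj1_sig a).
    apply (IH (upd v n a)); auto. apply upd_sub; auto.
Qed.

Lemma dir_list (B : algebra) (I : Type) (F : I -> subalg B) : directed_union_of F ->
  forall xs : list B, exists i, forall x, In x xs -> sub_pred (F i) x.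
Proof.
  intros [[i0 _] [Hd Hu]] xs. induction xs as [|x xs IH].
  - exists i0; intros x [].
  - destruct IH as [i Hi]. destruct (Hu x) as [j Hj]. destruct (Hd i j) as [k [Hk1 Hk2]].
    exists k. intros y [<-|Hy]; auto.
Qed.

Lemma upd_self (A : Type) (v : nat -> A) n : upd v n (v n) = v.
Proof.
  apply functional_extensionality; intro k; unfold upd.
  destruct (Nat.eqb_spec k n); subst; auto.
Qed.

Lemma ae_union (B : algebra) (I : Type) (F : I -> subalg B) : directed_union_of F ->
  forall f, univ_exist f ->
  (forall i (v : nat -> sub_algebra (F i)), sat (sub_algebra (F i)) v f) ->
  forall w : nat -> B, sat B w f.
Proof.
  intros HD f Hf. induction Hf as [f Hf|n f Hf IH]; intros Hall w.
  - destruct (dir_list _ _ _ HD (map w (0 :: fvars f))) as [i Hi].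
    assert (H0 : sub_pred (F i) (w 0)) by (apply Hi; left; reflexivity).
    set (v := fun k => match excluded_middle_informative (sub_pred (F i) (w k)) with
                       | left p => exist (fun x => sub_pred (F i) x) (w k) p
                       | right _ => exist (fun x => sub_pred (F i) x) (w 0) H0 end).
    apply (sat_agree _ _ (fun k => proj1_sig (v k))).
    + intros k Hk. unfold v. destruct (excluded_middle_informative _) as [p|np]; auto.
      exfalso; apply np; apply Hi; right; apply in_map; auto.
    + apply (ex_up _ (F i) _ Hf v); auto.
  - simpl. intro b. apply IH. intros i v. specialize (Hall i v (v n)). simpl in Hall.
    rewrite upd_self in Hall. exact Hall.
Qed.

Lemma teval_hom (A B : algebra) (h : A -> B) (Hh : is_hom A B h) v w t :
  (forall k, w k = h (v k)) -> h (teval A v t) = teval B w t.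
Proof.
  destruct Hh as [Hc [Hm Ha]]. intro H; induction t; simpl.
  - rewrite H; reflexivity.
  - rewrite Hc, IHt1, IHt2; reflexivity.
  - rewrite Hm, IHt1, IHt2; reflexivity.
  - rewrite Ha, IHt; reflexivity.
Qed.

Lemma pos_hom (A B : algebra) (h : A -> B) (Hh : is_hom A B h) (Hs : surjective h) f :
  positive f -> forall v w, (forall k, w k = h (v k)) -> sat A v f -> sat B w f.
Proof.
  induction 1 as [| |t1 t2|f g Hf IHf Hg IHg|f g Hf IHf Hg IHg|n f Hf IHpositive|n f Hf IHpositive]; simpl; intros v w H Hsat; auto.
  - rewrite <- (teval_hom _ _ h Hh v w t1 H), <- (teval_hom _ _ h Hh v w t2 H), Hsat; reflexivity.
  - destruct Hsat; split; eauto.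
  - destruct Hsat; [left|right]; eauto.
  - intro b. destruct (Hs b) as [a <-]. apply (IHpositive (upd v n a)); auto.
    intro k; unfold upd; destruct (Nat.eqb k n); auto.
  - destruct Hsat as [a Ha]. exists (h a). apply (IHpositive (upd v n a)); auto.
    intro k; unfold upd; destruct (Nat.eqb k n); auto.
Qed.

Lemma pos_models (A B : algebra) (h : A -> B) (Hh : is_hom A B h) (Hs : surjective h) T :
  (forall f, T f -> positive f) -> models A T -> models B T.
Proof.
  intros HT HA f Hf w.
  set (v := fun k => proj1_sig (constructive_indefinite_description _ (Hs (w k)))).
  apply (pos_hom _ _ h Hh Hs f (HT f Hf) v); [|apply HA; auto].
  intro k. unfold v. destruct (constructive_indefinite_description _ _); simpl; auto.
Qed.

Definition cantor := nat -> bool.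
Definition dep (n : nat) (a : cantor -> Prop) : Prop :=
  forall f g : cantor, (forall i, i < n -> f i = g i) -> (a f <-> a g).
Definition Cp (a : cantor -> Prop) : Prop := exists n, dep n a.

Lemma dep_mono n m a : n <= m -> dep n a -> dep m a.
Proof. intros Hnm H f g Hfg. apply H. intros i Hi. apply Hfg. lia. Qed.

Lemma dep_inter n a b : dep n a -> dep n b -> dep n (fun u => a u /\ b u).
Proof. intros Ha Hb f g H. rewrite (Ha f g H), (Hb f g H). tauto. Qed.

Lemma dep_compl n a : dep n a -> dep n (fun u => ~ a u).
Proof. intros Ha f g H. rewrite (Ha f g H). tauto. Qed.

Lemma Cp_inter a b : Cp a -> Cp b -> Cp (fun u => a u /\ b u).
Proof.
  intros [n Ha] [m Hb]. exists (max n m). apply dep_inter; [apply (dep_mono n)|apply (dep_mono m)]; auto; lia.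
Qed.

Definition Csub : subalg (powB cantor).
Proof.
  refine (Subalg (powB cantor) (fun a : powB cantor => Cp a) _ _ _).
  - intros a b Ha Hb. exact (Cp_inter a b Ha Hb).
  - intros a b Ha Hb. exact (Cp_inter a b Ha Hb).
  - intros a [n Hn]. exists n. exact (dep_compl n a Hn).
Defined.

Definition CA := sub_algebra Csub.

Lemma Cp_full : Cp (fun _ => True).
Proof. exists 0. intros f g _. tauto. Qed.

Definition flip (f : cantor) (n : nat) : cantor := fun i => if Nat.eqb i n then negb (f n) else f i.

Lemma CA_ncr : ~ completely_representable CA.
Proof.
  apply (setrep_ncr CA cantor (fun (x : CA) u => proj1_sig x u)
           (exist _ (fun _ => True) Cp_full) (fun _ => true)).
  - exact (setrep_sub (powB cantor) cantor (fun (a : powB cantor) u => a u) Csub (setrep_pow cantor)).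
  - intros l f Hlf. destruct l as [l [n Hn]]. simpl in *.
    assert (Hc : Cp (fun g => l g /\ g n = f n)).
    { apply Cp_inter. exists n; exact Hn. exists (S n). intros g h Hgh. rewrite (Hgh n) by lia. tauto. }
    exists (exist _ (fun g => l g /\ g n = f n) Hc), f, (flip f n). simpl.
    assert (Hfl : l (flip f n)).
    { apply (Hn f); auto. intros i Hi. unfold flip. destruct (Nat.eqb_spec i n); [lia|auto]. }
    split; [auto|]. split; [auto|]. split; [auto|].
    unfold flip. rewrite Nat.eqb_refl. destruct (f n); simpl; intros [_ H]; discriminate.
Qed.

Lemma pow_cr (Y : Type) : completely_representable (powB Y).
Proof.
  apply (setrep_cr (powB Y) Y (fun (a : powB Y) u => a u) (fun _ => True)).
  - apply setrep_pow.
  - intro x. exists (fun u => u = x). simpl. split; auto. intros s Hs u ->; auto.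
Qed.

Lemma part1 : exists (B : algebra) (S : subalg B),
      completely_representable B /\ ~ completely_representable (sub_algebra S).
Proof. exists (powB cantor), Csub. split; [apply pow_cr|apply CA_ncr]. Qed.

Definition Fsub (n : nat) : subalg CA.
Proof.
  refine {| sub_pred := fun x : CA => dep n (proj1_sig x) |}.
  - intros a b Ha Hb. simpl. apply dep_inter; auto.
  - intros a b Ha Hb. simpl. apply dep_inter; auto.
  - intros a Ha. simpl. apply dep_compl; auto.
Defined.

Lemma part2 : exists (B : algebra) (I : Type) (F : I -> subalg B),
      directed_union_of F /\
      (forall i, completely_representable (sub_algebra (F i))) /\
      ~ completely_representable B.
Proof.
  exists CA, nat, Fsub. split; [|split].
  - split; [exists 0; auto|split].
    + intros i j. exists (max i j). simpl. split; intros x Hx; [apply (dep_mono i)|apply (dep_mono j)]; auto; lia.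
    + intros [x [n Hn]]. exists n. simpl. exact Hn.
  - intro n.
    assert (Hfull : dep n (fun _ : cantor => True)) by (intros f g _; tauto).
    apply (setrep_cr (sub_algebra (Fsub n)) cantor
             (fun (x : sub_algebra (Fsub n)) u => proj1_sig (proj1_sig x) u)
             (exist _ (exist _ (fun _ => True) Cp_full) Hfull)).
    + apply (setrep_sub CA cantor (fun (x : CA) u => proj1_sig x u)).
      exact (setrep_sub (powB cantor) cantor (fun (a : powB cantor) u => a u) Csub (setrep_pow cantor)).
    + intro x.
      assert (He : dep n (fun g => forall i, i < n -> g i = x i)).
      { intros f g H. split; intros H' i Hi; [rewrite <- H|rewrite H]; auto. }
      exists (exist _ (exist _ (fun g => forall i, i < n -> g i = x i) (ex_intro _ n He)) He).
      simpl. split; auto.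
      intros [[s Cs] Ds] Hsx u Hu. simpl in *. apply (Ds u x Hu). exact Hsx.
  - apply CA_ncr.
Qed.

Definition prefix (f : cantor) (m : nat) : list bool := map f (seq 0 m).

Lemma prefix_length f m : length (prefix f m) = m.
Proof. unfold prefix. rewrite length_map, length_seq. reflexivity. Qed.

Lemma prefix_nth f m i : i < m -> nth i (prefix f m) false = f i.
Proof.
  intro H. unfold prefix. rewrite (nth_indep _ false (f 0)) by (rewrite length_map, length_seq; lia).
  rewrite map_nth, seq_nth by lia. reflexivity.
Qed.

Definition detw (n : nat) (a : list bool -> Prop) : Prop :=
  forall s t, n <= length s -> n <= length t ->
    (forall i, i < n -> nth i s false = nth i t false) -> (a s <-> a t).
Definition Tp (a : list bool -> Prop) : Prop := exists n, detw n a.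

Lemma detw_mono n m a : n <= m -> detw n a -> detw m a.
Proof. intros Hnm H s t Hs Ht Hst. apply H; try lia. intros i Hi; apply Hst; lia. Qed.

Lemma Tp_inter a b : Tp a -> Tp b -> Tp (fun u => a u /\ b u).
Proof.
  intros [n Ha] [m Hb]. exists (max n m).
  apply (detw_mono n (max n m)) in Ha; [|lia]. apply (detw_mono m (max n m)) in Hb; [|lia].
  intros s t Hs Ht Hst. rewrite (Ha s t), (Hb s t); auto; tauto.
Qed.

Definition Tsub : subalg (powB (list bool)).
Proof.
  refine (Subalg (powB (list bool)) (fun a : powB (list bool) => Tp a) _ _ _).
  - intros a b Ha Hb. exact (Tp_inter a b Ha Hb).
  - intros a b Ha Hb. exact (Tp_inter a b Ha Hb).
  - intros a [n Hn]. exists n. intros s t Hs Ht Hst. cbn. rewrite (Hn s t Hs Ht Hst). tauto.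
Defined.

Definition TA := sub_algebra Tsub.

Definition hset (a : list bool -> Prop) : cantor -> Prop :=
  fun f => exists N, forall m, N <= m -> a (prefix f m).

Lemma prefix_det n a f g m : detw n a -> n <= m -> (forall i, i < n -> f i = g i) ->
  (a (prefix f m) <-> a (prefix g n)).
Proof.
  intros H Hm Hfg. apply H; rewrite ?prefix_length; auto.
  intros i Hi. rewrite !prefix_nth by lia. auto.
Qed.

Lemma hset_char n a : detw n a -> forall f, hset a f <-> a (prefix f n).
Proof.
  intros H f. split.
  - intros [N HN]. specialize (HN (max N n) ltac:(lia)).
    rewrite (prefix_det n a f f (max N n) H) in HN; auto; lia.
  - intro Hf. exists n. intros m Hm. rewrite (prefix_det n a f f m H); auto.
Qed.

Lemma hset_C a : Tp a -> Cp (hset a).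
Proof.
  intros [n H]. exists n. intros f g Hfg. rewrite !(hset_char n a H).
  rewrite (prefix_det n a f g n H); auto. tauto.
Qed.

Definition h (x : TA) : CA := exist _ (hset (proj1_sig x)) (hset_C _ (proj2_sig x)).

Lemma h_hom : is_hom TA CA h.
Proof.
  split; [|split].
  - intros [a Ha] [b Hb]. apply sig_ext. simpl. apply set_ext. intro f. unfold hset. split.
    + intros [N HN]. split; exists N; intros m Hm; apply HN; auto.
    + intros [[N1 H1] [N2 H2]]. exists (max N1 N2). intros m Hm. split; [apply H1|apply H2]; lia.
  - intros [a Ha] [b Hb]. apply sig_ext. simpl. apply set_ext. intro f. unfold hset. split.
    + intros [N HN]. split; exists N; intros m Hm; apply HN; auto.
    + intros [[N1 H1] [N2 H2]]. exists (max N1 N2). intros m Hm. split; [apply H1|apply H2]; lia.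
  - intros [a [n Ha]]. apply sig_ext. simpl. apply set_ext. intro f.
    assert (Hc : detw n (fun u => ~ a u)).
    { intros s t Hs Ht Hst. rewrite (Ha s t Hs Ht Hst). tauto. }
    rewrite (hset_char n _ Hc), (hset_char n a Ha). tauto.
Qed.

Lemma h_surj : surjective h.
Proof.
  intros [c [n Hc]].
  set (a := fun s : list bool => n <= length s /\ c (fun i => nth i s false)).
  assert (Ha : detw n a).
  { intros s t Hs Ht Hst. unfold a. rewrite (Hc (fun i => nth i s false) (fun i => nth i t false)); auto. tauto. }
  exists (exist (fun a : powB (list bool) => Tp a) a (ex_intro _ n Ha)).
  apply sig_ext. simpl. apply set_ext. intro f. rewrite (hset_char n a Ha). unfold a.
  rewrite prefix_length. rewrite (Hc _ f). { split; [tauto|auto]. }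
  intros i Hi. apply prefix_nth; auto.
Qed.

Lemma TA_cr : completely_representable TA.
Proof.
  assert (Hfull : Tp (fun _ => True)) by (exists 0; intros s t _ _ _; tauto).
  apply (setrep_cr TA (list bool) (fun (x : TA) u => proj1_sig x u)
           (exist _ (fun _ => True) Hfull)).
  - exact (setrep_sub (powB (list bool)) (list bool) (fun (a : powB (list bool)) u => a u) Tsub (setrep_pow (list bool))).
  - intro x.
    assert (He : Tp (fun s => s = x)).
    { exists (S (length x)). intros s t Hs Ht _. split; intros ->; lia. }
    exists (exist _ (fun s => s = x) He). simpl. split; auto. intros s Hs u ->; auto.
Qed.

Lemma part3 : exists (A B : algebra) (h : A -> B),
      is_hom A B h /\ surjective h /\
      completely_representable A /\ ~ completely_representable B.
Proof. exists TA, CA, h. split; [apply h_hom|split; [apply h_surj|split; [apply TA_cr|apply CA_ncr]]]. Qed.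
Theorem mainTheorem6 :
  (* not closed under subalgebras *)
  (exists (B : algebra) (S : subalg B),
      completely_representable B /\
      ~ completely_representable (sub_algebra S)) /\
  (* not closed under directed unions *)
  (exists (B : algebra) (I : Type) (F : I -> subalg B),
      directed_union_of F /\
      (forall i, completely_representable (sub_algebra (F i))) /\
      ~ completely_representable B) /\
  (* not closed under homomorphic images *)
  (exists (A B : algebra) (h : A -> B),
      is_hom A B h /\ surjective h /\
      completely_representable A /\ ~ completely_representable B) /\
  (* not axiomatisable by a universal theory *)
  ~ (exists T : formula -> Prop,
        (forall f, T f -> universal f) /\
        axiomatises T completely_representable) /\
  (* not axiomatisable by a universal-existential theory *)
  ~ (exists T : formula -> Prop,
        (forall f, T f -> univ_exist f) /\
        axiomatises T completely_representable) /\
  (* not axiomatisable by a positive theory *)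
  ~ (exists T : formula -> Prop,
        (forall f, T f -> positive f) /\
        axiomatises T completely_representable).
Proof.
  split; [exact part1|]. split; [exact part2|]. split; [exact part3|].
  split; [|split].
  - intros [T [HT Hax]]. destruct part1 as [B [S [HB HS]]].
    apply HS. apply Hax. intros f Hf v.
    apply (univ_down B S f (HT f Hf) v (fun k => proj1_sig (v k))); [reflexivity|].
    apply (proj1 (Hax B) HB); auto.
  - intros [T [HT Hax]]. destruct part2 as [B [I [F [HD [HF HB]]]]].
    apply HB. apply Hax. intros f Hf w.
    apply (ae_union B I F HD f (HT f Hf)). intros i v. apply (proj1 (Hax _) (HF i)); auto.
  - intros [T [HT Hax]]. destruct part3 as [A [B [h0 [Hh [Hs [HA HB]]]]]].
    apply HB. apply Hax. apply (pos_models A B h0 Hh Hs T HT). apply Hax; auto.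
Qed.
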